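(* Let $X$ be a locally compact Hausdorff space, let $M$ be a countably generated Hilbert $C_0(X)$-module, and let $U,V\subseteq X$ be $\sigma$-compact open sets with $V$ compactly contained in $U$ (i.e. $\overline V$ compact and $\overline V\subseteq U$). If $F$ is a submodule of $MC_0(V)$ that is a direct summand of $MC_0(U)$ (i.e. $MC_0(U)=F+ (F^\perp\cap MC_0(U))$), then $F$ is a direct summand of $M$, i.e. $M=F+F^\perp$.
   Context: $F^\perp$ denotes the orthogonal complement with respect to the $C_0(X)$-valued inner product. $MC_0(U)$ denotes the closed submodule $\overline{\mathrm{span}}\{m f: m\in M,\ f\in C_0(U)\}$. *)

(* Defs.v *)
From HB Require Import structures.
From mathcomp Require Import all_boot all_order all_algebra.
From mathcomp Require Import complex.
From mathcomp Require Import all_classical all_reals topology normedtype.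
Import Order.TTheory GRing.Theory Num.Theory.

Set Implicit Arguments. Unset Strict Implicit. Unset Printing Implicit Defensive.

Local Open Scope classical_set_scope.
Local Open Scope ring_scope.

Definition cmod (R : realType) (z : R[i]) : R := Normc.normc z.

Definition locally_compact_hausdorff (X : topologicalType) : Prop :=
  hausdorff_space X /\ (forall x : X, exists K : set X, nbhs x K /\ compact K).

Definition sigma_compact_open (X : topologicalType) (U : set X) : Prop :=
  open U /\ exists K : nat -> set X, (forall n, compact (K n)) /\ U = \bigcup_n K n.

Definition compactly_contained (X : topologicalType) (V U : set X) : Prop :=
  compact (closure V) /\ closure V `<=` U.

Definition ccontinuous (R : realType) (X : topologicalType) (f : X -> R[i]) : Prop :=
  forall (x : X) (e : R), 0 < e -> nbhs x [set y | cmod (f y - f x) < e].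

Definition C0 (R : realType) (X : topologicalType) (f : X -> R[i]) : Prop :=
  ccontinuous f /\ forall e : R, 0 < e -> compact [set x | e <= cmod (f x)].

(** C_0(U) for U open in X, viewed as the ideal of C_0(X) of functions
    vanishing outside U. *)
Definition C0on (R : realType) (X : topologicalType) (U : set X) (f : X -> R[i]) : Prop :=
  C0 f /\ (forall x, ~ U x -> f x = 0).

(** Hilbert C_0(X)-module structure on a complex vector space M:
    right action [act] of C_0(X), C_0(X)-valued inner product [ip]
    (linear in the second variable), complete for the norm
    ||m|| = ||<m,m>||_oo ^ (1/2). *)
Record hilbert_C0_module (R : realType) (X : topologicalType) (M : lmodType R[i]) := {
  act : M -> (X -> R[i]) -> M;
  ip : M -> M -> X -> R[i];
  act_addl : forall m n f, C0 f -> act (m + n) f = act m f + act n f;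
  act_addr : forall m f g, C0 f -> C0 g -> act m (f \+ g) = act m f + act m g;
  act_mul : forall m f g, C0 f -> C0 g -> act m (f \* g) = act (act m f) g;
  act_scalel : forall (a : R[i]) m f, C0 f -> act (a *: m) f = a *: act m f;
  act_scaler : forall (a : R[i]) m f, C0 f -> act m (fun x => a * f x) = a *: act m f;
  ip_C0 : forall m n, C0 (ip m n);
  ip_linear : forall (a : R[i]) m n1 n2 x,
      ip m (a *: n1 + n2) x = a * ip m n1 x + ip m n2 x;
  ip_act : forall m n f x, C0 f -> ip m (act n f) x = ip m n x * f x;
  ip_sym : forall m n x, ip n m x = (ip m n x)^*%C;
  ip_pos : forall m x, 0 <= ip m m x;
  ip_def : forall m, (forall x, ip m m x = 0) -> m = 0;
  complete : forall u : nat -> M,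
      (forall e : R, 0 < e -> exists N, forall p q, (N <= p)%N -> (N <= q)%N ->
         forall x, cmod (ip (u p - u q) (u p - u q) x) <= e) ->
      exists l : M, forall e : R, 0 < e -> exists N, forall p, (N <= p)%N ->
         forall x, cmod (ip (u p - l) (u p - l) x) <= e
}.

Section HM.
Variables (R : realType) (X : topologicalType) (M : lmodType R[i])
          (H : hilbert_C0_module X M).

(** ||m - m'||^2 <= e *)
Definition close (m m' : M) (e : R) : Prop :=
  forall x, cmod (ip H (m - m') (m - m') x) <= e.

Definition countably_generated : Prop :=
  exists g : nat -> M, forall (m : M) (e : R), 0 < e ->
    exists (n : nat) (k : 'I_n -> nat) (f : 'I_n -> X -> R[i]),
      (forall i, C0 (f i)) /\ close m (\sum_(i < n) act H (g (k i)) (f i)) e.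

(** M C_0(U) = closed span of { m f | m in M, f in C_0(U) }. *)
Definition MC0 (U : set X) : set M :=
  [set m | forall e : R, 0 < e ->
    exists (n : nat) (ms : 'I_n -> M) (f : 'I_n -> X -> R[i]),
      (forall i, C0on U (f i)) /\ close m (\sum_(i < n) act H (ms i) (f i)) e].

Definition submodule (F : set M) : Prop :=
  F 0 /\ (forall m n, F m -> F n -> F (m + n)) /\
  (forall (a : R[i]) m, F m -> F (a *: m)) /\
  (forall m f, F m -> C0 f -> F (act H m f)).

Definition orth (F : set M) : set M :=
  [set m | forall n, F n -> forall x, ip H n m x = 0].

Definition is_sum (A F G : set M) : Prop :=
  forall m, A m <-> exists a b, F a /\ G b /\ m = a + b.

End HM.

(* Main.v *)
Require Import Defs.
From HB Require Import structures.
From mathcomp Require Import all_boot all_order all_algebra.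
From mathcomp Require Import complex.
From mathcomp Require Import all_classical all_reals topology normedtype.
From mathcomp Require Import ring lra.
Import Order.TTheory GRing.Theory Num.Theory.
Import numFieldNormedType.Exports.
Local Open Scope classical_set_scope.
Local Open Scope ring_scope.

Lemma lch_lc (X : topologicalType) : locally_compact_hausdorff X -> locally_compact [set: X].
Proof.
move=> [hX lc] x _; rewrite withinET; have [K [nK cK]] := lc x.
by exists K => //; split => //; exact: compact_closed.
Qed.

Lemma opc_compact_pre (X : topologicalType) (S : set (one_point_compactification X)) :
  compact S -> ~ S None -> compact (Some @^-1` S).
Proof.
move=> cS nSN G PG GS.
have PG' : ProperFilter (Some @ G) by exact: fmap_proper_filter.
have [p [Sp clp]] := cS _ PG' GS.
case: p Sp clp => [y|] Sp clp; last by [].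
exists y; split => //= A B GA nB.
have [q [[a Aa <-] [b Bb]]] : (Some @` A) `&` (Some @` B) !=set0.
  apply: clp; last exact: one_point_compactification_some_nbhs.
  have HH : G (Some @^-1` (Some @` A)) by apply: filterS GA => z Az; exists z.
  exact: HH.
by move=> [eab]; exists a; split => //; rewrite -eab.
Qed.

Lemma cmodR (R : realType) (a : R) : cmod (real_complex R a) = `|a|.
Proof. by rewrite /cmod /= expr0n /= addr0 sqrtr_sqr. Qed.

Lemma cmodRB (R : realType) (a b : R) : cmod (real_complex R a - real_complex R b) = `|a - b|.
Proof. by rewrite /cmod /= oppr0 addr0 expr0n /= addr0 sqrtr_sqr. Qed.

Lemma ury (R : realType) (X : topologicalType) (K U : set X) :
  locally_compact_hausdorff X -> compact K -> open U -> K `<=` U ->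
  exists g : X -> R[i], C0on U g /\ (forall x, K x -> g x = 1).
Proof.
move=> lch cK oU KU.
have [hX _] := lch.
have hT : hausdorff_space (one_point_compactification X) :=
  @one_point_compactification_hausdorff X (@lch_lc X lch) hX.
have nT : normal_space (one_point_compactification X) :=
  compact_normal hT one_point_compactification_compact.
have cA : compact (Some @` K : set (one_point_compactification X)).
  apply: continuous_compact => //; apply: continuous_subspaceT.
  exact: one_point_compactification_some_continuous.
have clA := compact_closed hT cA.
have clB : closed (~` (Some @` U) : set (one_point_compactification X)).
  exact/open_closedC/one_point_compactification_open_some.
have AB : (Some @` K) `&` ~` (Some @` U) = set0 :> set (one_point_compactification X).
  by apply/seteqP; split => // p [[x Kx <-]]; apply; exists x => //; exact: KU.
have := proj1 (@normal_separatorP R _) nT _ _ clA clB AB.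
move=> /(@uniform_separatorP _ R) [f [cf f01 fA fB]].
have f01' : forall p, 0 <= f p <= 1.
  by move=> p; have := f01 (f p) (ex_intro2 _ _ p I erefl); rewrite /= in_itv.
exists (fun x => (real_complex R (1 - f (Some x)))); split; first split; first split.
- move=> x e e0.
  have cfS : {for x, continuous (f \o Some)}.
    apply: continuous_comp; first exact: one_point_compactification_some_continuous.
    exact: cf.
  have H := @cvgr_dist_lt _ _ _ _ (nbhs_filter x) _ _ cfS _ e0.
  apply: (filterS _ H) => y /=.
  rewrite subr0 expr0n addr0 sqrtr_sqr.
  by have -> : 1 - f (Some y) - (1 - f (Some x)) = f (Some x) - f (Some y) by ring.
- move=> e e0.
  pose S := f @^-1` [set r : R | r <= 1 - e].
  have clS : closed S by apply: preimage_closed; [move=> ? _; exact: cf|exact: closed_le].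
  have cS : compact S.
    exact: (subclosed_compact clS one_point_compactification_compact).
  have nSN : ~ S None.
    rewrite /S /=; have -> : f None = 1 by apply: fB; exists None => //; case.
    lra.
  have -> : [set x | e <= cmod (real_complex R (1 - f (Some x)))] = Some @^-1` S.
    apply/seteqP; split => x; rewrite /= ?expr0n /= ?addr0 sqrtr_sqr ger0_norm ?subr_ge0;
      case/andP: (f01' (Some x)) => // _ _; rewrite /S /=; lra.
  exact: opc_compact_pre.
- move=> x nUx; have -> : f (Some x) = 1.
    by apply: fB; exists (Some x) => //; case=> y Uy [eyx]; apply: nUx; rewrite -eyx.
  by rewrite subrr.
- move=> x Kx; have -> : f (Some x) = 0.
    by apply: fA; exists (Some x) => //; exists x.
  by rewrite subr0.
Qed.

Section Mod.
Context {R : realType} {X : topologicalType} {M : lmodType R[i]}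
          (H : hilbert_C0_module X M).

Lemma ipD a u v x : ip H a (u + v) x = ip H a u x + ip H a v x.
Proof. by have := ip_linear H 1 a u v x; rewrite scale1r mul1r. Qed.

Lemma ip0 a x : ip H a 0 x = 0.
Proof. by apply: (addrI (ip H a 0 x)); rewrite addr0 -ipD addr0. Qed.

Lemma ipZ a k u x : ip H a (k *: u) x = k * ip H a u x.
Proof. by have := ip_linear H k a u 0 x; rewrite addr0 ip0 addr0. Qed.

Lemma ipN a u x : ip H a (- u) x = - ip H a u x.
Proof. by rewrite -scaleN1r ipZ mulN1r. Qed.

Lemma ipB a u v x : ip H a (u - v) x = ip H a u x - ip H a v x.
Proof. by rewrite ipD ipN. Qed.

Lemma ip_sum a n (F : 'I_n -> M) x :
  ip H a (\sum_(i < n) F i) x = \sum_(i < n) ip H a (F i) x.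
Proof.
elim/big_rec2: _ => [|i y1 y2 _ <-]; first exact: ip0.
by rewrite ipD.
Qed.

Lemma cmodJ (z : R[i]) : cmod (z^*)%C = cmod z.
Proof. by case: z => a b; rewrite /cmod /= sqrrN. Qed.

Lemma cmod_ge0 (z : R[i]) : 0 <= cmod z.
Proof. by case: z => a b; rewrite /cmod /= sqrtr_ge0. Qed.

Lemma vanish1 V n x : MC0 H V n -> ~ V x -> ip H n n x = 0.
Proof.
move=> Vn nVx.
suff : cmod (ip H n n x) = 0 by move/Normc.eq0_normc.
apply/eqP; rewrite eq_le cmod_ge0 andbT; apply/negP => /negP; rewrite -ltNge => c0.
have e0 : 0 < cmod (ip H n n x) / 2 by rewrite divr_gt0.
have [k [ms [f [fV cl]]]] := Vn _ e0.
set s := \sum_(i < k) act H (ms i) (f i) in cl.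
have s0 : forall a, ip H a s x = 0.
  move=> a; rewrite ip_sum big1 // => i _.
  by rewrite ip_act; [rewrite (proj2 (fV i)) // mulr0|exact: (proj1 (fV i))].
have s0' : forall a, ip H s a x = 0.
  by move=> a; rewrite ip_sym s0 /=; exact: conjc0.
have : ip H n n x = ((ip H (n - s) (n - s) x)^*)%C.
  rewrite -[in LHS](subrK s n) (ipD (n - s + s) (n - s) s) s0 addr0 ip_sym (ipD (n - s) (n - s) s) s0 addr0.
  by [].
move=> h; have := cl x; rewrite -cmodJ -h; lra.
Qed.

Lemma vanish2 V n m x : MC0 H V n -> ~ V x -> ip H n m x = 0.
Proof.
move=> Vn nVx; have nn := vanish1 _ _ _ Vn nVx.
set c := ip H n m x; set P := ip H m m x.
apply/eqP; apply/negP => /negP cn0.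
have cJn0 : (c^*)%C != 0 by rewrite conjc_eq0.
have PJ : (P^*)%C = P by rewrite /P -ip_sym.
pose t := - (P + 1) / (2 * (c^*)%C).
have tc : t * (c^*)%C = - (P + 1) / 2.
  by rewrite /t; field.
have tJ : (t^*)%C * c = - (P + 1) / 2.
  rewrite /t rmorphM rmorphN fmorphV rmorphM rmorphD rmorph1 rmorph_nat /= PJ conjcK.
  by field.
pose w := m + t *: n.
have hw : ip H w w x = -1.
  rewrite {2}/w ipD ipZ (ip_sym H n w) (ip_sym H m w) /w.
  rewrite !ipD !ipZ nn mulr0 addr0 -/c -/P (ip_sym H n m) -/c.
  rewrite rmorphD rmorphM /= conjcK PJ -addrA tJ tc.
  by field.
have := ip_pos H w x; rewrite hw oppr_ge0 ler10 //.
Qed.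

End Mod.

Theorem lemma6p8 (R : realType) (X : topologicalType) (M : lmodType R[i])
  (H : hilbert_C0_module X M) (U V : set X) (F : set M) :
  locally_compact_hausdorff X ->
  countably_generated H ->
  sigma_compact_open U -> sigma_compact_open V ->
  compactly_contained V U ->
  submodule H F ->
  F `<=` MC0 H V ->
  is_sum (MC0 H U) F (orth H F `&` MC0 H U) ->
  is_sum setT F (orth H F).
Proof.
move=> lch _ [oU _] [oV _] [cV VU] subF FsV sumU m.
split => // _.
have [g [gU g1]] := ury R X (closure V) U lch cV oU VU.
have mgU : MC0 H U (act H m g).
  move=> e e0; exists 1%N, (fun _ => m), (fun _ => g); split => // x.
  rewrite big_ord1 subrr ip0 /cmod /= expr0n /= addr0 sqrtr0.
  exact: ltW.
have [a [b [Fa [[ob _] eq]]]] := (proj1 (sumU _)) mgU.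
exists a, (b + (m - act H m g)); split => //; split; last first.
  by rewrite addrA -eq addrC subrK.
move=> n Fn x.
rewrite ipD (ob n Fn) add0r ipB ip_act; last exact: (proj1 gU).
have [Vx|nVx] := pselect (V x).
  by rewrite g1 ?mulr1 ?subrr //; exact: subset_closure.
by rewrite (vanish2 H _ _ _ _ (FsV _ Fn) nVx) mul0r subrr.
Qed.
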